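(* Let $p$ be an odd prime and let $G$ be the non-abelian group of order $p^3$ and exponent $p$. Let $U = g_1 \cdot \dotsc \cdot g_m$ be a sequence over $G$ of length $m \geq p+1$ that has central product. If $U$ contains an EGZ subsequence, then there exists a permutation $\sigma$ of $\{1,\dots,m\}$ such that $g_{\sigma(1)} g_{\sigma(2)} \cdots g_{\sigma(m)} = 1$. In particular, every EGZ sequence over $G$ contains a non-empty product-one subsequence.
   Context: $G = \langle x, y : x^p = y^p = 1,\ [y,x] \text{ central}\rangle$ is the Heisenberg group of order $p^3$ and exponent $p$; here $Z(G) = [G,G]$ has order $p$. A sequence over $G$ is a finite unordered list (multiset) $g_1 \cdot \dotsc \cdot g_\ell$ of elements of $G$; its length is $\ell$; a subsequence is a sub-multiset. A non-empty sequence $T$ is product-one if, for some ordering of its terms, the product equals $1$. A sequence $T = g_1\cdot\dotsc\cdot g_\ell$ has central product if $g_1 g_2\cdots g_\ell \in Z(G)$ (since $[G,G]=Z(G)$, this does not depend on the ordering). A sequence $T$ over $G$ is an EGZ sequence if $T$ has central product and $T$ contains a subsequence consisting of $p$ terms which can be labelled $h_1,\dots,h_{p-1},h_p$ so that $h_p$ does not commute with the product $h_\alpha h_{\alpha+1}\cdots h_\beta$ for any $1 \le \alpha \le \beta \le p-1$. *)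

(* Defs.v *)
From mathcomp Require Import all_boot all_fingroup all_solvable.
Set Implicit Arguments. Unset Strict Implicit. Unset Printing Implicit Defensive.
Import GroupScope.

(* A sequence over a group is modelled as a [seq gT] (its multiset of terms);
   orderings of it are sequences [t] with [perm_eq s t]. *)

Definition seq_prod (gT : finGroupType) (s : seq gT) : gT := \prod_(x <- s) x.

Definition seq_over (gT : finGroupType) (G : {set gT}) (s : seq gT) : Prop :=
  all (mem G) s.

Definition sub_ms (gT : finGroupType) (T U : seq gT) : Prop :=
  exists R : seq gT, perm_eq U (T ++ R).

(* s has central product (independent of ordering since [G,G] = Z(G)) *)
Definition central_prod (gT : finGroupType) (G : {set gT}) (s : seq gT) : Prop :=
  seq_prod s \in 'Z(G).

Definition product_one (gT : finGroupType) (s : seq gT) : Prop :=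
  s <> [::] /\ exists t : seq gT, perm_eq s t /\ seq_prod t = 1.

(* EGZ sequence: central product and a subsequence h_1 ... h_p of p terms
   such that h_p does not commute with h_a h_{a+1} ... h_b for any
   1 <= a <= b <= p-1.  With 0-based lists, h_a..h_b = drop (a-1) (take b h)
   and h_p = nth 1 h (p-1). *)
Definition EGZ (gT : finGroupType) (G : {set gT}) (p : nat) (T : seq gT) : Prop :=
  central_prod G T /\
  exists h : seq gT,
    size h = p /\ sub_ms h T /\
    forall a b : nat, 1 <= a -> a <= b -> b <= p.-1 ->
      ~ commute (nth 1 h p.-1) (seq_prod (drop a.-1 (take b h))).

(* Main.v *)
Require Import Defs.
From mathcomp Require Import all_boot all_fingroup all_solvable.
Import GroupScope.

Section S.
Variables (gT : finGroupType) (G : {group gT}).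
Hypothesis hZ : forall x y, x \in G -> y \in G -> [~ x, y] \in 'Z(G).

Lemma prod_cons (x : gT) s : seq_prod (x :: s) = x * seq_prod s.
Proof. by rewrite /seq_prod big_cons. Qed.
Lemma prod_cat (s t : seq gT) : seq_prod (s ++ t) = seq_prod s * seq_prod t.
Proof. by rewrite /seq_prod big_cat. Qed.
Lemma prod_nil : seq_prod [::] = (1 : gT).
Proof. by rewrite /seq_prod big_nil. Qed.

Lemma prod_in s : all (mem G) s -> seq_prod s \in G.
Proof.
elim: s => [|x s IH] /=; first by rewrite prod_nil group1.
by case/andP=> Hx Hs; rewrite prod_cons groupM // IH.
Qed.

Lemma Zcomm z y : z \in 'Z(G) -> y \in G -> z * y = y * z.
Proof. by case/centerP=> _ H Hy; apply: H. Qed.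

Lemma perm_prod s t : all (mem G) s -> perm_eq s t ->
  exists2 z, z \in 'Z(G) & seq_prod t = seq_prod s * z.
Proof.
elim: s t => [|x s IH] t /=.
  by move=> _ Hp; move: (perm_size Hp); case: t Hp => // _ _; exists 1; rewrite ?group1 ?mulg1.
case/andP=> Hx Hs Hp.
have xt : x \in t by rewrite -(perm_mem Hp) mem_head.
case/splitPr: xt Hp => t1 t2 Hp.
have Hp' : perm_eq s (t1 ++ t2).
  by rewrite -(perm_cons x) (perm_trans Hp) // (perm_catCA t1 [:: x] t2).
have Ht : all (mem G) (t1 ++ t2) by rewrite -(perm_all _ Hp').
rewrite all_cat in Ht; case/andP: Ht => H1 H2.
have [z Hz E] := IH _ Hs Hp'.
have c1 := hZ _ _ (prod_in _ H1) Hx.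
exists (z * [~ seq_prod t1, x]); first by rewrite groupM.
rewrite prod_cat !prod_cons mulgA (commgC (seq_prod t1) x) -(mulgA _ [~ _, _]) (Zcomm _ _ c1 (prod_in _ H2)).
by rewrite !mulgA -(mulgA x) -prod_cat E !mulgA.
Qed.


Lemma all_sub (s s' : seq gT) : {subset s <= s'} -> all (mem G) s' -> all (mem G) s.
Proof. by move=> Hs H; apply/allP=> y Hy; apply: (allP H); apply: Hs. Qed.

Lemma main_lemma (p : nat) (U h : seq gT) :
  #|'Z(G)| = p -> 0 < p ->
  all (mem G) U -> seq_prod U \in 'Z(G) -> size h = p -> sub_ms h U ->
  (forall a b : nat, 1 <= a -> a <= b -> b <= p.-1 ->
      ~ commute (nth 1 h p.-1) (seq_prod (drop a.-1 (take b h)))) ->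
  exists t : seq gT, perm_eq U t /\ seq_prod t = 1.
Proof.
move=> oZ p0 UG UZ sh [R HR] Hc.
set x := nth 1 h p.-1.
set h' := take p.-1 h.
have Eh : h = rcons h' x.
  by rewrite /h' /x -take_nth ?sh ?prednK // take_oversize ?sh.
have HR' : perm_eq U (R ++ h) by rewrite (perm_trans HR) // perm_catC.
have WG : all (mem G) (R ++ h) by rewrite -(perm_all _ HR').
have [z0 Hz0 EW] := perm_prod _ _ UG HR'.
set Q := seq_prod (R ++ h).
have QZ : Q \in 'Z(G) by rewrite /Q EW groupM.
rewrite all_cat in WG; case/andP: WG => RG hG.
have xG : x \in G by apply: (allP hG); rewrite /x mem_nth // sh prednK.
have BG k : seq_prod (drop k h') \in G.
  by apply: prod_in; apply: (all_sub _ _ _ hG) => y /mem_drop /mem_take.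
pose f (k : 'I_p) := [~ x, seq_prod (drop k h')].
have Et (k : nat) : seq_prod (R ++ take k h' ++ x :: drop k h') = Q * [~ x, seq_prod (drop k h')].
  rewrite /Q Eh -cats1 -{3}(cat_take_drop k h') !prod_cat !prod_cons prod_nil mulg1.
  by rewrite (commgC x) !mulgA.
have finj : injective f.
  have key (j k : 'I_p) : j < k -> f j != f k.
    move=> ljk; apply/negP => /eqP E.
    have hsz : size h' = p.-1 by rewrite /h' size_takel // sh leq_pred.
    have kp : k <= p.-1 by rewrite -ltnS prednK.
    have Ed : drop j h' = drop j (take k h') ++ drop k h'.
      rewrite -{1}(cat_take_drop k h') drop_cat size_takel ?hsz // ljk //.
    move: E; rewrite /f Ed prod_cat commgMJ => /esym.
    rewrite -{1}(mulg1 [~ x, _]) => /mulgI /esym /eqP.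
    rewrite conjg_eq1 => /commgP.
    rewrite /h' take_takel //.
    by apply: (Hc j.+1 k).
  move=> j k E; case: (ltngtP j k) => [l|l|/val_inj //].
    by move: (key _ _ l); rewrite E eqxx.
  by move: (key _ _ l); rewrite E eqxx.
have fZ : [set f k | k : 'I_p] = 'Z(G).
  apply/eqP; rewrite eqEcard card_imset // card_ord oZ leqnn andbT.
  by apply/subsetP => y /imsetP [k _ ->]; apply: hZ.
have : Q^-1 \in [set f k | k : 'I_p] by rewrite fZ groupV.
case/imsetP => k _ Ek.
exists (R ++ take k h' ++ x :: drop k h'); split; last by rewrite Et -/(f k) -Ek mulgV.
apply: (perm_trans HR'); rewrite perm_cat2l Eh -cats1.
rewrite -{1}(cat_take_drop k h') -catA perm_cat2l.
by rewrite cats1 perm_rcons.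
Qed.
End S.

Lemma sub_ms_trans {gT : finGroupType} {a b c : seq gT} : sub_ms a b -> sub_ms b c -> sub_ms a c.
Proof.
move=> [R1 H1] [R2 H2]; exists (R1 ++ R2).
by rewrite (perm_trans H2) // catA perm_cat2r.
Qed.

Theorem theorem1p3 (gT : finGroupType) (G : {group gT}) (p : nat) :
  prime p -> odd p -> #|G| = (p ^ 3)%N -> ~~ abelian G -> exponent G = p ->
  (forall U : seq gT, seq_over G U -> p < size U -> central_prod G U ->
     (exists T : seq gT, sub_ms T U /\ EGZ G p T) ->
     exists t : seq gT, perm_eq U t /\ seq_prod t = 1)
  /\
  (forall T : seq gT, seq_over G T -> EGZ G p T ->
     exists S : seq gT, sub_ms S T /\ product_one S).
Proof.
move=> pp _ oG ncG _.
have pG : p.-group G by rewrite /pgroup oG pnatX pnat_id.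
have esG : extraspecial G.
  by apply: (p3group_extraspecial pG ncG); rewrite oG pfactorK.
have oZ : #|'Z(G)| = p := card_center_extraspecial pG esG.
have hZ : forall x y, x \in G -> y \in G -> [~ x, y] \in 'Z(G).
  move=> x y Hx Hy; case: esG => [[_ <-] _].
  by rewrite derg1 mem_commg.
have p0 := prime_gt0 pp.
split.
  move=> U UG _ UZ [T [HTU [_ [h [sh [HhT Hc]]]]]].
  exact: (@main_lemma _ _ hZ _ _ _ oZ p0 UG UZ sh (sub_ms_trans HhT HTU) Hc).
move=> T TG [TZ [h [sh [HhT Hc]]]].
exists T; split; first by exists [::]; rewrite cats0.
split.
  move=> T0; case: HhT => R; rewrite T0 => /perm_size /=.
  rewrite size_cat sh => /esym/eqP; rewrite addn_eq0 => /andP[/eqP p00 _]; by rewrite p00 in p0.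
exact: (@main_lemma _ _ hZ _ _ _ oZ p0 TG TZ sh HhT Hc).
Qed.
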